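(* Let $\alpha_a$ be a labeled dGL hybrid game, $S$ an inductive Angelic subvalue map for $\alpha_a$, and $\varphi$ a formula compatible with $S$ (i.e. $\models S(\mathsf{end})\rightarrow\varphi$). Then every state satisfying $S(a)$ satisfies $\langle\mathcal{P}(\alpha_a,S)\rangle\varphi$.
   Context: Differential game logic (dGL). Hybrid games are generated by $\alpha,\beta ::= x:=e \mid \alpha;\beta \mid ?Q \mid \{x'=f(x)\,\&\,Q\} \mid \alpha^{*} \mid \alpha\cup\beta \mid x:=* \mid\ !Q \mid \{x'=f(x)\,\&\,Q\}^{d} \mid \alpha^{\times} \mid \alpha\cap\beta \mid x:=\otimes$, with $x$ a real variable (vector for ODEs), $e,f(x)$ polynomial terms, $Q$ a formula. Players Angel and Demon: $x:=e$ deterministic assignment; in $x:=*$ Angel (in $x:=\otimes$ Demon) assigns any real; in $\{x'=f(x)\&Q\}$ Angel (in $\{\cdot\}^d$ Demon) chooses a duration $r\ge 0$ of following the ODE with $Q$ true throughout; $?Q$ makes Angel lose and $!Q$ makes Demon lose if $Q$ is false; in $\alpha\cup\beta$ Angel (in $\alpha\cap\beta$ Demon) chooses the branch; in $\alpha^*$ Angel (in $\alpha^\times$ Demon) decides before each iteration whether to repeat or stop; $\alpha;\beta$ sequential. Formulas: polynomial (in)equalities closed under connectives, real quantifiers, and modalities $\langle\alpha\rangle\varphi$ (Angel can win $\alpha$ reaching $\varphi$) and $[\alpha]\varphi\equiv\neg\langle\alpha\rangle\neg\varphi$, with the standard dGL winning-region semantics ($\langle x:=*\rangle\varphi\leftrightarrow\exists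 x\varphi$, $\langle x:=\otimes\rangle\varphi\leftrightarrow\forall x\varphi$, $\langle ?Q\rangle\varphi\leftrightarrow Q\wedge\varphi$, $\langle !Q\rangle\varphi\leftrightarrow(Q\rightarrow\varphi)$, $\cup$ as disjunction, $\cap$ as conjunction, $\langle\alpha;\beta\rangle\varphi\leftrightarrow\langle\alpha\rangle\langle\beta\rangle\varphi$, Angel ODE existential, Demon ODE universal, $\langle\alpha^*\rangle$ least and $\langle\alpha^\times\rangle$ greatest fixed point). $\models$ denotes validity. Labels: every node of the syntax tree carries a unique label; $\alpha_a$ has root label $a$; $\mathrm{nodes}(\alpha_a)$ is its set of subgame labels; $\mathsf{end}$ is a special extra label. A map $S$ assigns formulas to a label set containing $\mathrm{nodes}(\alpha_a)\cup\{\mathsf{end}\}$; $S\{\mathsf{end}\mapsto Q\}$ replaces the value at $\mathsf{end}$. $\gamma_g,\delta_d$ denote immediate subgames with root labels $g,d$. Existential projection $\mathcal{P}(\alpha_a,S)$: $(x:=* )_a\mapsto(x:=* )_a;?S(\mathsf{end})$; $\{x'=f(x)\&Q\}_a\mapsto\{x'=f(x)\&Q\}_a;?S(\mathsf{end})$; $(\gamma_g\cup\delta_d)_a\mapsto(?S(g);\mathcal{P}(\gamma_g,S))\cup(?S(d);\mathcal{P}(\delta_d,S))$; $((\gamma_g)^* )_a\mapsto(?S(g);\mathcal{P}(\gamma_g,S\{\mathsf{end}\mapsto S(a)\}))^*;?S(\mathsf{end})$; $(\gamma_g;\delta_d)_a\mapsto\mathcal{P}(\gamma_g,S\{\mathsf{end}\mapsto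 S(d)\});\mathcal{P}(\delta_d,S)$; $(\gamma_g\cap\delta_d)_a\mapsto\mathcal{P}(\gamma_g,S)\cap\mathcal{P}(\delta_d,S)$; $((\gamma_g)^\times)_a\mapsto\mathcal{P}(\gamma_g,S\{\mathsf{end}\mapsto S(a)\})^\times$; $x:=e,x:=\otimes,?Q,!Q,\{x'=f(x)\&Q\}^d$ unchanged (labels preserved, new nodes fresh labels). Inductive Angelic subvalue map ($S\Vdash\alpha_a$), recursively: atomic $\alpha$ ($x:=e,x:=*,x:=\otimes,?Q,!Q$, Angel or Demon ODE): $\models S(a)\rightarrow\langle\alpha\rangle S(\mathsf{end})$; $(\gamma_g\cup\delta_d)_a$: $\models S(a)\rightarrow S(g)\vee S(d)$, $S\Vdash\gamma_g$, $S\Vdash\delta_d$; $(\gamma_g\cap\delta_d)_a$: $\models S(a)\rightarrow S(g)\wedge S(d)$ and both; $(\gamma_g;\delta_d)_a$: $\models S(a)\rightarrow S(g)$, $S\{\mathsf{end}\mapsto S(d)\}\Vdash\gamma_g$, $S\Vdash\delta_d$; $((\gamma_g)^* )_a$: $\models S(a)\rightarrow\langle\mathcal{P}(\alpha_a,S)\rangle S(\mathsf{end})$ and $S\{\mathsf{end}\mapsto S(a)\}\Vdash\gamma_g$; $((\gamma_g)^\times)_a$: $\models S(a)\rightarrow S(g)\wedge S(\mathsf{end})$ and $S\{\mathsf{end}\mapsto S(a)\}\Vdash\gamma_g$. *)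

(* Defs.v *)
From Stdlib Require Import Reals List Arith.
Import ListNotations.
Open Scope R_scope.

Definition var := nat.
Definition state := var -> R.

Inductive trm : Type :=
  | TVar (x : var)
  | TConst (c : R)
  | TNeg (e : trm)
  | TPlus (e1 e2 : trm)
  | TTimes (e1 e2 : trm).

Fixpoint eval (e : trm) (s : state) : R :=
  match e with
  | TVar x => s x
  | TConst c => c
  | TNeg e => - eval e s
  | TPlus e1 e2 => eval e1 s + eval e2 s
  | TTimes e1 e2 => eval e1 s * eval e2 s
  end.

(** An ODE system x' = f(x): a list of pairs (x_i, f_i(x)). *)
Definition ode := list (var * trm).

Inductive fml : Type :=
  | FTrue
  | FFalse
  | FEq (e1 e2 : trm)
  | FLe (e1 e2 : trm)
  | FLt (e1 e2 : trm)
  | FNot (f : fml)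
  | FAnd (f g : fml)
  | FOr (f g : fml)
  | FImp (f g : fml)
  | FExists (x : var) (f : fml)
  | FForall (x : var) (f : fml)
  | FDia (a : game) (f : fml)
with game : Type :=
  | GAsgn (l : nat) (x : var) (e : trm)
  | GRand (l : nat) (x : var)
  | GDRand (l : nat) (x : var)
  | GTest (l : nat) (Q : fml)
  | GDTest (l : nat) (Q : fml)
  | GODE (l : nat) (o : ode) (Q : fml)
  | GDODE (l : nat) (o : ode) (Q : fml)
  | GChoice (l : nat) (a b : game)
  | GDChoice (l : nat) (a b : game)
  | GSeq (l : nat) (a b : game)
  | GStar (l : nat) (a : game)
  | GDStar (l : nat) (a : game).

Definition FBox (a : game) (f : fml) : fml := FNot (FDia a (FNot f)).

Definition lab (a : game) : nat :=
  match a with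
  | GAsgn l _ _ | GRand l _ | GDRand l _ | GTest l _ | GDTest l _
  | GODE l _ _ | GDODE l _ _ | GChoice l _ _ | GDChoice l _ _
  | GSeq l _ _ | GStar l _ | GDStar l _ => l
  end.

Fixpoint nodes (a : game) : list nat :=
  match a with
  | GChoice l g d | GDChoice l g d | GSeq l g d => l :: nodes g ++ nodes d
  | GStar l g | GDStar l g => l :: nodes g
  | _ => [lab a]
  end.

Definition upd (s : state) (x : var) (r : R) : state :=
  fun y => if Nat.eqb y x then r else s y.

Definition deriv_within (r : R) (g : R -> R) (t : R) (d : R) : Prop :=
  forall eps, 0 < eps -> exists delta, 0 < delta /\
    forall h, h <> 0 -> Rabs h < delta -> 0 <= t + h <= r ->
      Rabs ((g (t + h) - g t) / h - d) < eps.

Definition odesol (o : ode) (P : state -> Prop) (s : state) (r : R)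
  (phi : R -> state) : Prop :=
  (forall y, phi 0 y = s y) /\
  (forall t, 0 <= t <= r -> forall y, ~ In y (map fst o) -> phi t y = s y) /\
  (forall t, 0 <= t <= r -> forall x e, In (x, e) o ->
      deriv_within r (fun u => phi u x) t (eval e (phi t))) /\
  (forall t, 0 <= t <= r -> P (phi t)).

Fixpoint fsem (f : fml) (s : state) {struct f} : Prop :=
  match f with
  | FTrue => True
  | FFalse => False
  | FEq e1 e2 => eval e1 s = eval e2 s
  | FLe e1 e2 => eval e1 s <= eval e2 s
  | FLt e1 e2 => eval e1 s < eval e2 s
  | FNot g => ~ fsem g s
  | FAnd g h => fsem g s /\ fsem h s
  | FOr g h => fsem g s \/ fsem h s
  | FImp g h => fsem g s -> fsem h s
  | FExists x g => exists r, fsem g (upd s x r)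
  | FForall x g => forall r, fsem g (upd s x r)
  | FDia a g => gsem a (fsem g) s
  end
with gsem (a : game) (X : state -> Prop) (s : state) {struct a} : Prop :=
  match a with
  | GAsgn _ x e => X (upd s x (eval e s))
  | GRand _ x => exists r, X (upd s x r)
  | GDRand _ x => forall r, X (upd s x r)
  | GTest _ Q => fsem Q s /\ X s
  | GDTest _ Q => fsem Q s -> X s
  | GODE _ o Q =>
      exists r phi, 0 <= r /\ odesol o (fsem Q) s r phi /\ X (phi r)
  | GDODE _ o Q =>
      forall r phi, 0 <= r -> odesol o (fsem Q) s r phi -> X (phi r)
  | GChoice _ g d => gsem g X s \/ gsem d X s
  | GDChoice _ g d => gsem g X s /\ gsem d X s
  | GSeq _ g d => gsem g (gsem d X) s
  | GStar _ g =>   (* least fixed point of Z |-> X u [[g]](Z) *)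
      forall Z : state -> Prop,
        (forall t, X t \/ gsem g Z t -> Z t) -> Z s
  | GDStar _ g =>  (* greatest fixed point of Z |-> X n [[g]](Z) *)
      exists Z : state -> Prop,
        Z s /\ (forall t, Z t -> X t /\ gsem g Z t)
  end.

Definition valid (f : fml) : Prop := forall s, fsem f s.

Inductive slot : Type := Node (n : nat) | End.

Definition lmap := slot -> fml.

Definition set_end (S : lmap) (Q : fml) : lmap :=
  fun k => match k with End => Q | Node n => S (Node n) end.

Local Open Scope nat_scope.

(** ** Existential projection.
    [proj a S n] returns the projected game together with the next
    unused label; new nodes get the fresh labels n, n+1, ... *)
Fixpoint proj (a : game) (S : lmap) (n : nat) : game * nat :=
  match a with
  | GRand l x => (GSeq n (GRand l x) (GTest (n + 1) (S End)), n + 2)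
  | GODE l o Q => (GSeq n (GODE l o Q) (GTest (n + 1) (S End)), n + 2)
  | GChoice l g d =>
      let '(pg, n1) := proj g S (n + 4) in
      let '(pd, n2) := proj d S n1 in
      (GChoice l (GSeq n (GTest (n + 1) (S (Node (lab g)))) pg)
                 (GSeq (n + 2) (GTest (n + 3) (S (Node (lab d)))) pd), n2)
  | GStar l g =>
      let '(pg, n1) := proj g (set_end S (S (Node l))) (n + 4) in
      (GSeq n (GStar l (GSeq (n + 1) (GTest (n + 2) (S (Node (lab g)))) pg))
              (GTest (n + 3) (S End)), n1)
  | GSeq l g d =>
      let '(pg, n1) := proj g (set_end S (S (Node (lab d)))) n in
      let '(pd, n2) := proj d S n1 in
      (GSeq l pg pd, n2)
  | GDChoice l g d =>
      let '(pg, n1) := proj g S n in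
      let '(pd, n2) := proj d S n1 in
      (GDChoice l pg pd, n2)
  | GDStar l g =>
      let '(pg, n1) := proj g (set_end S (S (Node l))) n in
      (GDStar l pg, n1)
  | _ => (a, n)
  end.

Definition project (a : game) (S : lmap) : game :=
  fst (proj a S (Nat.succ (fold_right Nat.max 0%nat (nodes a)))).

Fixpoint subval (S : lmap) (a : game) : Prop :=
  match a with
  | GChoice l g d =>
      valid (FImp (S (Node l)) (FOr (S (Node (lab g))) (S (Node (lab d))))) /\
      subval S g /\ subval S d
  | GDChoice l g d =>
      valid (FImp (S (Node l)) (FAnd (S (Node (lab g))) (S (Node (lab d))))) /\
      subval S g /\ subval S d
  | GSeq l g d =>
      valid (FImp (S (Node l)) (S (Node (lab g)))) /\
      subval (set_end S (S (Node (lab d)))) g /\ subval S d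
  | GStar l g =>
      valid (FImp (S (Node l)) (FDia (project a S) (S End))) /\
      subval (set_end S (S (Node l))) g
  | GDStar l g =>
      valid (FImp (S (Node l)) (FAnd (S (Node (lab g))) (S End))) /\
      subval (set_end S (S (Node l))) g
  | _ => valid (FImp (S (Node (lab a))) (FDia a (S End)))
  end.

(* Main.v *)
Require Import Defs.
From Stdlib Require Import Reals List.

Lemma gsem_mono : forall a (X Y : state -> Prop), (forall t, X t -> Y t) ->
  forall s, gsem a X s -> gsem a Y s.
Proof.
  induction a; intros X Y HXY s H; simpl in *; firstorder.
Qed.

Local Open Scope nat_scope.

Lemma fst_choice l g d S n : fst (proj (GChoice l g d) S n) =
  GChoice l (GSeq n (GTest (n + 1) (S (Node (lab g)))) (fst (proj g S (n+4))))
            (GSeq (n + 2) (GTest (n + 3) (S (Node (lab d)))) (fst (proj d S (snd (proj g S (n+4)))))).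
Proof. simpl. destruct (proj g S (n+4)); destruct (proj d S _); reflexivity. Qed.
Lemma fst_dchoice l g d S n : fst (proj (GDChoice l g d) S n) =
  GDChoice l (fst (proj g S n)) (fst (proj d S (snd (proj g S n)))).
Proof. simpl. destruct (proj g S n); destruct (proj d S _); reflexivity. Qed.
Lemma fst_seq l g d S n : fst (proj (GSeq l g d) S n) =
  GSeq l (fst (proj g (set_end S (S (Node (lab d)))) n))
         (fst (proj d S (snd (proj g (set_end S (S (Node (lab d)))) n)))).
Proof. simpl. destruct (proj g _ n); destruct (proj d S _); reflexivity. Qed.
Lemma fst_star l g S n : fst (proj (GStar l g) S n) =
  GSeq n (GStar l (GSeq (n + 1) (GTest (n + 2) (S (Node (lab g)))) (fst (proj g (set_end S (S (Node l))) (n + 4)))))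
              (GTest (n + 3) (S End)).
Proof. simpl. destruct (proj g _ _); reflexivity. Qed.
Lemma fst_dstar l g S n : fst (proj (GDStar l g) S n) =
  GDStar l (fst (proj g (set_end S (S (Node l))) n)).
Proof. simpl. destruct (proj g _ _); reflexivity. Qed.

Lemma proj_lab_indep : forall a S n m X s,
  gsem (fst (proj a S n)) X s -> gsem (fst (proj a S m)) X s.
Proof.
  induction a; intros S n m X s H; try exact H.
  - rewrite fst_choice in *; simpl in *.
    destruct H as [[H1 H2]|[H1 H2]]; [left|right]; split; eauto.
  - rewrite fst_dchoice in *; simpl in *. destruct H; split; eauto.
  - rewrite fst_seq in *; simpl in *.
    eapply IHa1. eapply gsem_mono; [|exact H]. intros t; apply IHa2.
  - rewrite fst_star in *; simpl in *. intros Z HZ. apply H.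
    intros t [Ht|[Ht1 Ht2]]; apply HZ; [left; auto|right; split; eauto].
  - rewrite fst_dstar in *; simpl in *. destruct H as [Z [HZ1 HZ2]].
    exists Z; split; auto. intros t Ht; destruct (HZ2 t Ht); split; eauto.
Qed.

Lemma main_gen : forall a S n X, subval S a -> (forall t, fsem (S End) t -> X t) ->
  forall s, fsem (S (Node (lab a))) s -> gsem (fst (proj a S n)) X s.
Proof.
  induction a; intros S n X Hsv HX s Hs; simpl in Hsv.
  all: try (eapply gsem_mono; [exact HX| exact (Hsv s Hs)]).
  - destruct (Hsv s Hs) as [r Hr]. simpl. exists r. auto.
  - destruct (Hsv s Hs) as [r [phi [H1 [H2 H3]]]]. simpl. exists r, phi. auto.
  - destruct Hsv as [H1 [H2 H3]]. rewrite fst_choice. simpl.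
    destruct (H1 s Hs); [left|right]; split; auto; first [apply IHa1 | apply IHa2]; auto.
  - destruct Hsv as [H1 [H2 H3]]. rewrite fst_dchoice. simpl.
    destruct (H1 s Hs); split; first [apply IHa1 | apply IHa2]; auto.
  - destruct Hsv as [H1 [H2 H3]]. rewrite fst_seq. simpl.
    apply IHa1; [exact H2| |exact (H1 s Hs)]. intros t Ht. apply IHa2; auto.
  - destruct Hsv as [H1 H2]. unfold project in H1.
    eapply proj_lab_indep. eapply gsem_mono; [exact HX|]. exact (H1 s Hs).
  - destruct Hsv as [H1 H2]. rewrite fst_dstar. simpl.
    exists (fsem (S (Node l))). split; auto. intros t Ht.
    destruct (H1 t Ht). split; auto.
Qed.

Theorem mainTheorem9 (a : game) (S : lmap) (phi : fml) :
  NoDup (nodes a) ->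
  subval S a ->
  valid (FImp (S End) phi) ->
  forall s : state, fsem (S (Node (lab a))) s ->
    fsem (FDia (project a S) phi) s.
Proof.
  intros _ Hsv Hphi s Hs. simpl. unfold project.
  apply main_gen; auto.
Qed.
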